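(* For every $b>1$, every $b'$ with $1\le b'<b$, and every positive integer $n$, there is an instance with $n+2$ vertices in which $C_o(s)=1$ while the partially naive agent with true bias $b$ and believed bias $b'$, with ties in its choices broken in favor of edges not leading directly to $t$, incurs cost $b^n$. In particular, optimistic partially naive agents can have cost ratio exponential in the number of vertices.
   Context: An instance is a finite directed acyclic graph $G=(V,E)$ with nonnegative edge costs $c(u,v)$, start node $s$ and target node $t$, where $t$ is the unique node with no outgoing edges; $C_o(u)$ is the minimum cost of a $u$–$t$ path. For a parameter $\beta$, the sophisticated agent with bias $\beta$ is defined by $C^{\beta}(t)=0$ and, for $u\ne t$, $S^\beta(u)\in\arg\min_{v:(u,v)\in E}(\beta\,c(u,v)+C^\beta(v))$, $C^\beta(u)=c(u,S^\beta(u))+C^\beta(S^\beta(u))$. Let $C_s'=C^{b'}$. The partially naive agent with true bias $b$ and believed bias $b'$: $C_p(t)=0$, and for $u\neq t$, $S_p(u)\in\arg\min_{v:(u,v)\in E}(b\,c(u,v)+C_s'(v))$, $C_p(u)=c(u,S_p(u))+C_p(S_p(u))$; its incurred cost is $C_p(s)$. It is called optimistic if $b'<b$. *)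

(* Defs.v *)
From HB Require Import structures.
From mathcomp Require Import all_boot all_order all_algebra.
From mathcomp Require Import reals.
Set Implicit Arguments. Unset Strict Implicit. Unset Printing Implicit Defensive.
Import Order.TTheory GRing.Theory Num.Theory.
Local Open Scope ring_scope.

Section Agents.
Variables (R : realType) (V : finType).
Implicit Types (E : rel V) (c : V -> V -> R) (s t u : V) (p : seq V).

Definition acyclic E : Prop :=
  forall u p, p != [::] -> path E u p -> last u p != u.

Definition is_instance E c (s t : V) : Prop :=
  [/\ acyclic E,
      (forall u, (forall v, ~~ E u v) <-> u = t)
    & (forall u v, E u v -> 0 <= c u v)].

Fixpoint path_cost c (u : V) p : R :=
  match p with
  | [::] => 0
  | v :: p' => c u v + path_cost c v p'
  end.

Definition is_path_to E (t u : V) p : bool := path E u p && (last u p == t).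

Definition opt_cost_is E c (t u : V) (x : R) : Prop :=
  (exists p, is_path_to E t u p /\ path_cost c u p = x) /\
  (forall p, is_path_to E t u p -> x <= path_cost c u p).

Definition soph_agent E c (t : V) (beta : R) (S : V -> V) (C : V -> R) : Prop :=
  C t = 0 /\
  forall u, u != t ->
    [/\ E u (S u),
        (forall v, E u v -> beta * c u (S u) + C (S u) <= beta * c u v + C v)
      & C u = c u (S u) + C (S u)].

(* (Sp, Cp) is a partially naive agent with true bias b, whose beliefs about
   its future behaviour are given by the sophisticated cost function Cs' *)
Definition pnaive_agent E c (t : V) (b : R) (Cs' : V -> R)
    (Sp : V -> V) (Cp : V -> R) : Prop :=
  Cp t = 0 /\
  forall u, u != t ->
    [/\ E u (Sp u),
        (forall v, E u v -> b * c u (Sp u) + Cs' (Sp u) <= b * c u v + Cs' v)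
      & Cp u = c u (Sp u) + Cp (Sp u)].

Definition tie_break_away_from_t E c (t : V) (b : R) (Cs' : V -> R)
    (Sp : V -> V) : Prop :=
  forall u, u != t -> Sp u = t ->
    forall v, E u v -> v != t -> b * c u t + Cs' t < b * c u v + Cs' v.

End Agents.

(* Main.v *)
Require Import Defs.
From HB Require Import structures.
From mathcomp Require Import all_boot all_order all_algebra.
From mathcomp Require Import reals.
From mathcomp Require Import zify.
From mathcomp Require Import lra.
Import Order.TTheory GRing.Theory Num.Theory.
Local Open Scope ring_scope.

Definition Ee (n : nat) : rel 'I_n.+2 :=
  fun u v => ((u <= n)%N && ((v == u.+1 :> nat) || (v == n.+1 :> nat))).
Arguments Ee {n}.
Definition cc (R : realType) (b : R) (n : nat) (u v : 'I_n.+2) : R :=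
  if (v == n.+1 :> nat) then b ^+ u else 0.

Lemma Ee_inc {n} {u v : 'I_n.+2} : Ee u v -> (u < v)%N.
Proof. rewrite /Ee => /andP[H /orP[/eqP->|/eqP->]]; lia. Qed.

Lemma path_inc {n} {u : 'I_n.+2} {p} : path (@Ee n) u p -> (u <= last u p)%N.
Proof.
elim: p u => [|v p IH] u //= /andP[H1 H2].
have := Ee_inc H1; have := IH _ H2; lia.
Qed.

Lemma Ee_case {n} {u v : 'I_n.+2} : Ee u v ->
  (u <= n)%N /\ (v = ord_max \/ ((v : nat) = u.+1 /\ (u < n)%N)).
Proof.
rewrite /Ee => /andP[H /orP[/eqP E|/eqP E]]; split => //.
  case: (ltnP u n) => Hu; first by right.
  left; apply: val_inj => /=; lia.
by left; apply: val_inj.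
Qed.

Lemma not_t {n} {u : 'I_n.+2} : u != ord_max -> (u <= n)%N.
Proof.
move=> H; have := ltn_ord u; have : (u:nat) <> n.+1.
  by move=> E; move/eqP: H; apply; apply: val_inj.
lia.
Qed.

Lemma down_ind n (P : 'I_n.+2 -> Prop) :
  (forall u : 'I_n.+2, (u <= n)%N -> (forall w : 'I_n.+2, (u < w <= n)%N -> P w) -> P u) ->
  forall u : 'I_n.+2, (u <= n)%N -> P u.
Proof.
move=> H; suff: forall k (u : 'I_n.+2), (n - u <= k)%N -> (u <= n)%N -> P u.
  by move=> S u Hu; apply: (S (n - u)%N).
elim=> [|k IH] u Hk Hu; apply: H => // w /andP[H1 H2]; first lia.
apply: IH => //; lia.
Qed.

Arguments cc {R} b {n}.

Lemma cc_t (R : realType) (b : R) n (u : 'I_n.+2) : cc b u ord_max = b ^+ u.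
Proof. by rewrite /cc /= eqxx. Qed.

Lemma cc_w (R : realType) (b : R) n (u v : 'I_n.+2) :
  (v : nat) = u.+1 -> (u < n)%N -> cc b u v = 0.
Proof. move=> Hv Hl; rewrite /cc Hv ifF //; apply/eqP; lia. Qed.

Lemma Ee_t {n} {u : 'I_n.+2} : (u <= n)%N -> Ee u ord_max.
Proof. by move=> H; rewrite /Ee H /= eqxx orbT. Qed.

Lemma Ee_w {n} {u v : 'I_n.+2} : (v : nat) = u.+1 -> (u < n)%N -> Ee u v.
Proof. move=> Hv H; rewrite /Ee Hv eqxx /=; lia. Qed.

Lemma ne_t {n} {u : 'I_n.+2} : (u <= n)%N -> u != ord_max.
Proof. move=> H; apply/eqP => E; move: H; rewrite E /=; lia. Qed.

Lemma inordS {n} {u : 'I_n.+2} : (u <= n)%N -> ((inord u.+1 : 'I_n.+2) : nat) = u.+1.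
Proof. move=> H; rewrite inordK //; lia. Qed.

Lemma lower {R : realType} {b : R} {n} : 1 <= b ->
  forall {p} {u : 'I_n.+2}, path Ee u p -> last u p = ord_max -> u != ord_max ->
  b ^+ u <= path_cost (cc b) u p.
Proof.
move=> Hb; elim=> [|v p IH] u /=.
  by move=> _ -> /eqP.
move=> /andP[H1 H2] Hl Hu.
case: (Ee_case H1) => Hun [Hv|[Hv Hlt]].
  subst v; case: p IH H2 Hl => [|w p] IH H2 Hl.
    by rewrite /= cc_t addr0.
  by move: H2 => /= /andP[]; rewrite /Ee /= ltnn.
have Hvn : (v <= n)%N by lia.
rewrite cc_w // add0r; apply: le_trans (IH _ H2 Hl (ne_t Hvn)).
rewrite Hv exprS; apply: ler_peMl => //; apply: exprn_ge0; lra.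
Qed.

Theorem mainTheorem11 (R : realType) (b b' : R) (n : nat) :
  1 < b -> 1 <= b' -> b' < b -> (0 < n)%N ->
  exists (V : finType) (E : rel V) (c : V -> V -> R) (s t : V),
    [/\ #|V| = n.+2,
        is_instance E c s t,
        opt_cost_is E c t s 1,
        (exists (S' : V -> V) (C' : V -> R) (Sp : V -> V) (Cp : V -> R),
           [/\ soph_agent E c t b' S' C',
               pnaive_agent E c t b C' Sp Cp
             & tie_break_away_from_t E c t b C' Sp])
      & (forall (S' : V -> V) (C' : V -> R) (Sp : V -> V) (Cp : V -> R),
           soph_agent E c t b' S' C' ->
           pnaive_agent E c t b C' Sp Cp ->
           tie_break_away_from_t E c t b C' Sp ->
           Cp s = b ^+ n)].
Proof.
move=> Hb1 Hb'1 Hbb' Hn.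
have Hb0 : 0 <= b by lra.
exists 'I_n.+2, (@Ee n), (cc b), ord0, ord_max.
split.
- exact: card_ord.
- split.
  + move=> u [//|v p] _ /= /andP[H1 H2].
    have := Ee_inc H1; have := path_inc H2 => A B.
    apply/eqP => E; move: A B; rewrite E; lia.
  + move=> u; split.
      move=> H; apply/eqP; apply: contraT => Hu.
      by have := H ord_max; rewrite Ee_t // (not_t Hu).
    by move=> -> v; rewrite /Ee /= ltnn.
  + move=> u v _; rewrite /cc; case: ifP => _ //; exact: exprn_ge0.
- split.
    exists [:: ord_max]; split; first by rewrite /is_path_to /= Ee_t // eqxx.
    by rewrite /= cc_t addr0 expr0.
  move=> p /andP[H1 /eqP H2].
  have := lower (ltW Hb1) H1 H2 (@ne_t n ord0 (leq0n n)); by rewrite expr0.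
- exists (fun _ => ord_max), (fun u => if u == ord_max then 0 else b ^+ u),
    (fun u : 'I_n.+2 => inord u.+1), (fun u => if u == ord_max then 0 else b ^+ n).
  split.
  + split; first by rewrite eqxx.
    move=> u Hu; have Hun := not_t Hu; split.
    * exact: Ee_t.
    * move=> v Hv; rewrite eqxx cc_t.
      case: (Ee_case Hv) => _ [->|[Hv' Hlt]]; first by rewrite eqxx cc_t.
      rewrite cc_w // (negbTE (ne_t _)); last lia.
      rewrite Hv' mulr0 add0r addr0 exprS ler_wpM2r //.
        exact: exprn_ge0.
      exact: ltW.
    * by rewrite (negbTE Hu) cc_t eqxx addr0.
  + split; first by rewrite eqxx.
    move=> u Hu; have Hun := not_t Hu.
    have HS := inordS Hun.
    case: (ltnP u n) => Hlt.
    * have Hw : (((inord u.+1 : 'I_n.+2) : nat) <= n)%N by rewrite HS.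
      split.
      -- exact: Ee_w.
      -- move=> v Hv; rewrite cc_w // (negbTE (ne_t Hw)) mulr0 add0r.
         case: (Ee_case Hv) => _ [->|[Hv' Hlt']].
           by rewrite eqxx cc_t addr0 HS exprS.
         have -> : v = inord u.+1 by apply: val_inj; rewrite /= HS.
         by rewrite cc_w // (negbTE (ne_t Hw)) mulr0 add0r.
      -- by rewrite (negbTE Hu) cc_w // (negbTE (ne_t Hw)) add0r.
    * have Ht : (inord u.+1 : 'I_n.+2) = ord_max by apply: val_inj; rewrite /= HS; lia.
      have Hu' : (u : nat) = n by lia.
      rewrite Ht; split.
      -- exact: Ee_t.
      -- move=> v Hv; case: (Ee_case Hv) => _ [->|[_ Hlt']] //; lia.
      -- by rewrite (negbTE Hu) eqxx cc_t addr0 Hu'.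
  + move=> u Hu /= Ht v Hv Hvt; have Hun := not_t Hu.
    have HS := inordS Hun.
    case: (Ee_case Hv) => _ [Hv'|[_ Hlt']]; first by rewrite Hv' eqxx in Hvt.
    move/(congr1 (@nat_of_ord _)): Ht; rewrite HS /=; lia.
- move=> S' C' Sp Cp [HC't HS'] [HCpt HSp] Htb.
  have Hb'0 : 0 <= b' by lra.
  have C1 : forall u : 'I_n.+2, (u <= n)%N -> C' u = b ^+ u.
    apply: down_ind => u Hun IH.
    have Hu := ne_t Hun.
    case: (HS' u Hu) => HE Hmin HC.
    case: (Ee_case HE) => _ [Hs|[Hs Hlt]].
      by rewrite HC Hs cc_t HC't addr0.
    have Hw : (S' u <= n)%N by rewrite Hs.
    have := Hmin _ (Ee_t Hun).
    rewrite cc_w // mulr0 add0r IH; last by rewrite Hs; lia.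
    rewrite cc_t HC't addr0 Hs exprS => H.
    have Hx : 0 < b ^+ u by apply: exprn_gt0; lra.
    exfalso; nra.
  have C2 : forall u : 'I_n.+2, (u <= n)%N -> Cp u = b ^+ n.
    apply: down_ind => u Hun IH.
    have Hu := ne_t Hun.
    case: (HSp u Hu) => HE Hmin HC.
    case: (Ee_case HE) => _ [Hs|[Hs Hlt]].
      case: (ltnP u n) => Hlt.
        have HS := inordS Hun.
        have Hw : (((inord u.+1 : 'I_n.+2) : nat) <= n)%N by rewrite HS.
        have := Htb u Hu Hs _ (Ee_w HS Hlt) (ne_t Hw).
        rewrite cc_t HC't addr0 cc_w // mulr0 add0r C1 // HS exprS.
        by rewrite ltxx.
      by rewrite HC Hs cc_t HCpt addr0; congr (_ ^+ _); lia.
    have Hw : (Sp u <= n)%N by rewrite Hs.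
    by rewrite HC cc_w // add0r IH // Hs; lia.
  exact: C2.
Qed.
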